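(* There exists a two-way optical interference automaton (2OIA) that recognizes the language $\{a^nb^{2^n}\mid n\in\mathbb{N}\}$ in time $O(2^n)$ on inputs of the form $a^nb^m$.
   Context: A two-way optical interference automaton (2OIA) is a deterministic machine with finite state set $Q$, start state $q_0$, accepting and rejecting states, finite input alphabet $\Sigma$, and tape alphabet $\Gamma=\Sigma\cup\{\text{¢},\$\}$. On input $w=w_1\cdots w_N$ the read-only tape holds ¢$w_1\cdots w_N\$$ in cells $0,1,\dots,N+1$, scanned by a two-way head. For each cell $m$ there is a monochromatic point light source at the point $(m,0)$ of the plane; all sources have the same wavelength $\lambda$ and the same initial amplitude $A_0$, and each source is at any moment either switched off or switched on with initial phase $0$ or $\pi$. A detector is located at a grid point $(j,k)$ with $j,k\in\{0,\tfrac12,1,\tfrac32,\dots,N+1\}$, pointing towards the source array; its field of vision is the cone making angle $\pi/4$ with the vertical line through it, so it sees exactly the sources at $(m,0)$ with $|m-j|\le k$. The resultant wave at the detector is $\sum A_0 r_m^{-1}e^{i(\phi_m+2\pi r_m/\lambda)}$, summed over the switched-on sources it sees, where $r_m$ is the distance from the source to the detector and $\phi_m\in\{0,\pi\}$ the source's phase; the detector outputs $\underline{1}$ if this resultant is nonzero and $\underline{0}$ otherwise. The transition function $\delta:Q\times\Gamma\times\{\underline0,\underline1\}\to Q\times\{\text{left},\text{right},\text{stay}\}\times\{\text{left},\text{right},\text{up},\text{down},\text{stay}\}\times\{\mathrm{toggle}(0),\mathrm{toggle}(\pi),-\}$ maps (state, scanned symbol, detector output) to a new state, a move of the head by one cell,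 a move of the detector by one grid step (of length $1/2$), and an action on the source of the currently scanned cell: $\mathrm{toggle}(\phi)$ switches it on with phase $\phi$ if it is off and switches it off if it is on; $-$ does nothing. Initially all sources are off, the machine is in $q_0$, the head is on cell $0$, and the detector is at a prescribed initial grid position. For a given source, a maximal sequence of toggles at consecutive time steps is called non-transient if its length is odd; there is a constant $k$ such that the machine crashes if it attempts a non-transient toggle sequence on a single source for the $(k+1)$-th time. The machine accepts when it is in an accepting state with detector output $\underline0$. Its running time is the total number of moves made by the head plus the number of moves made by the detector. A 2OIA recognizes a language $L$ if it accepts every input in $L$ and rejects every input not in $L$. *)

(* Defs.v *)
From Stdlib Require Import Reals List Arith Bool.
Import ListNotations.
Open Scope R_scope.

Inductive sym := SA | SB.

Inductive tsym := Cent | Dollar | Sym (s : sym).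

Inductive hmove := HLeft | HRight | HStay.
Inductive dmove := DLeft | DRight | DUp | DDown | DStay.
Inductive action := Toggle0 | TogglePi | NoAction.

Inductive src := Off | On0 | OnPi.

(** A 2OIA.  Detector positions are stored in half-units:
    (dj0, dk0) stands for the grid point (dj0/2, dk0/2). *)
Record OIA := {
  Q : Type;
  Q_finite : exists l : list Q, forall q, In q l;
  q0 : Q;
  is_acc : Q -> bool;
  is_rej : Q -> bool;
  acc_rej_disjoint : forall q, ~ (is_acc q = true /\ is_rej q = true);
  delta : Q -> tsym -> bool -> Q * hmove * dmove * action;
  lambda : R;
  lambda_pos : 0 < lambda;
  amp : R;
  amp_pos : 0 < amp;
  dj0 : nat;
  dk0 : nat;
  kcrash : nat           (* the constant k of the non-transient toggle rule *)
}.

Section Semantics.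
Variable M : OIA.

(** Configurations.  [crun m] is the length of the current (still open) run
    of consecutive toggles of source m (0 if none), [ccnt m] the number of
    completed non-transient (odd-length) toggle runs on source m, and
    [ctime] the number of head moves plus detector moves made so far. *)
Record config := {
  cst : Q M;
  chead : nat;
  cdj : nat;
  cdk : nat;
  csrc : nat -> src;
  crun : nat -> nat;
  ccnt : nat -> nat;
  ctime : nat
}.

Variable w : list sym.
Definition N : nat := length w.

(** Tape contents: cent w_1 ... w_N dollar, in cells 0 .. N+1. *)
Definition tape (i : nat) : tsym :=
  match i with
  | O => Cent
  | S i' => if (i' <? N)%nat then Sym (nth i' w SA) else Dollar
  end.

(** Grid: both coordinates in {0, 1/2, ..., N+1}, i.e. half-units <= 2(N+1). *)
Definition in_grid (dj dk : nat) : bool :=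
  ((dj <=? 2 * (N + 1)) && (dk <=? 2 * (N + 1)))%nat.

(** Source m is seen by the detector at (dj/2, dk/2) iff |m - dj/2| <= dk/2. *)
Definition visible (dj dk m : nat) : bool :=
  ((2 * m <=? dj + dk) && (dj <=? 2 * m + dk))%nat.

Definition src_on (s : src) : bool := match s with Off => false | _ => true end.
Definition src_sign (s : src) : R := match s with OnPi => -1 | _ => 1 end.

Definition dist (dj dk m : nat) : R :=
  sqrt (((INR (2 * m) - INR dj) / 2) ^ 2 + (INR dk / 2) ^ 2).

(** Contributions A0 r^-1 e^{i(phi + 2 pi r / lambda)}, with e^{i pi} = -1. *)
Definition contrib_re (c : config) (m : nat) : R :=
  if visible (cdj c) (cdk c) m && src_on (csrc c m) then
    src_sign (csrc c m) * amp M / dist (cdj c) (cdk c) m *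
      cos (2 * PI * dist (cdj c) (cdk c) m / lambda M)
  else 0.
Definition contrib_im (c : config) (m : nat) : R :=
  if visible (cdj c) (cdk c) m && src_on (csrc c m) then
    src_sign (csrc c m) * amp M / dist (cdj c) (cdk c) m *
      sin (2 * PI * dist (cdj c) (cdk c) m / lambda M)
  else 0.

Definition sources : list nat := seq 0 (N + 2).

Definition resultant_re (c : config) : R :=
  fold_right Rplus 0 (map (contrib_re c) sources).
Definition resultant_im (c : config) : R :=
  fold_right Rplus 0 (map (contrib_im c) sources).

(** The resultant wave is nonzero.  A switched-on visible source located
    exactly at the detector (distance 0, infinite amplitude) counts as a
    nonzero signal. *)
Definition resultant_nonzero (c : config) : Prop :=
  (exists m, In m sources /\ visible (cdj c) (cdk c) m = true /\
             src_on (csrc c m) = true /\ dist (cdj c) (cdk c) m = 0)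
  \/ resultant_re c <> 0 \/ resultant_im c <> 0.

(** Detector output b (true = 1, false = 0). *)
Definition output (c : config) (b : bool) : Prop :=
  b = true <-> resultant_nonzero c.

Definition halting (c : config) : bool := is_acc M (cst c) || is_rej M (cst c).

Inductive step_result := Next (c : config) | Crash.

Definition toggle (phi : src) (s : src) : src :=
  match s with Off => phi | _ => Off end.

Definition move_head (h : nat) (d : hmove) : option nat :=
  match d with
  | HLeft => match h with O => None | S h' => Some h' end
  | HRight => if (h <? N + 1)%nat then Some (S h) else None
  | HStay => Some h
  end.

Definition move_det (dj dk : nat) (d : dmove) : option (nat * nat) :=
  let r := match d with
    | DLeft => match dj with O => None | S j => Some (j, dk) end
    | DRight => Some (S dj, dk)
    | DUp => Some (dj, S dk)
    | DDown => match dk with O => None | S k => Some (dj, k) end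
    | DStay => Some (dj, dk)
    end in
  match r with
  | Some (j, k) => if in_grid j k then Some (j, k) else None
  | None => None
  end.

Definition hcost (d : hmove) : nat := match d with HStay => 0 | _ => 1 end.
Definition dcost (d : dmove) : nat := match d with DStay => 0 | _ => 1 end.

(** The action acts on the
    source of the currently scanned cell.  A run of consecutive toggles of a
    source ends at the first step in which that source is not toggled; if it
    had odd length it is a completed non-transient sequence.  The machine
    crashes when some source completes its (kcrash+1)-th non-transient
    sequence, or when the head leaves the tape or the detector leaves the
    grid. *)
Definition step (c : config) (b : bool) : step_result :=
  match delta M (cst c) (tape (chead c)) b with
  | (q', hm, dm, a) =>
    let h := chead c in
    let tog m := match a with NoAction => false | _ => Nat.eqb m h end in
    let src' m := if tog m then
                    match a with Toggle0 => toggle On0 (csrc c m)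
                               | _ => toggle OnPi (csrc c m) end
                  else csrc c m in
    let run' m := if tog m then S (crun c m) else O in
    let cnt' m := if tog m then ccnt c m
                  else (ccnt c m + (if Nat.odd (crun c m) then 1 else 0))%nat in
    if existsb (fun m => kcrash M <? cnt' m)%nat sources then Crash else
    match move_head h hm, move_det (cdj c) (cdk c) dm with
    | Some h', Some (j', k') =>
        Next {| cst := q'; chead := h'; cdj := j'; cdk := k';
                csrc := src'; crun := run'; ccnt := cnt';
                ctime := (ctime c + hcost hm + dcost dm)%nat |}
    | _, _ => Crash
    end
  end.

(** At halting every open run is maximal, hence completed. *)
Definition final_ok (c : config) : bool :=
  negb (existsb (fun m => kcrash M <?
          ccnt c m + (if Nat.odd (crun c m) then 1 else 0))%nat sources).

(** Accepting and rejecting states are halting; the machine accepts iff it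
    halts in an accepting state with detector output 0 (and does not crash). *)
Inductive halts_from : config -> bool -> nat -> Prop :=
| HaltStop : forall c b, halting c = true -> output c b ->
    halts_from c (is_acc M (cst c) && final_ok c && negb b) (ctime c)
| HaltStep : forall c b c' r t, halting c = false -> output c b ->
    step c b = Next c' -> halts_from c' r t -> halts_from c r t
| HaltCrash : forall c b, halting c = false -> output c b ->
    step c b = Crash -> halts_from c false (ctime c).

Definition init : config :=
  {| cst := q0 M; chead := 0; cdj := dj0 M; cdk := dk0 M;
     csrc := fun _ => Off; crun := fun _ => O; ccnt := fun _ => O;
     ctime := 0 |}.

(** If the prescribed initial detector position is outside the grid of this
    input, the machine crashes at once (time 0). *)
Definition accepts : Prop :=
  in_grid (dj0 M) (dk0 M) = true /\ exists t, halts_from init true t.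

Definition rejects : Prop :=
  in_grid (dj0 M) (dk0 M) = false \/ exists t, halts_from init false t.

Definition halts_within (T : nat) : Prop :=
  in_grid (dj0 M) (dk0 M) = false \/
  exists r t, halts_from init r t /\ (t <= T)%nat.

End Semantics.

Definition recognizes (M : OIA) (L : list sym -> Prop) : Prop :=
  forall w, (L w -> accepts M w) /\ (~ L w -> rejects M w).

Definition Lexp (w : list sym) : Prop :=
  exists n : nat, w = repeat SA n ++ repeat SB (2 ^ n).

(* Main.v *)
Require Import Defs.
From Stdlib Require Import Reals List Arith.
From Stdlib Require Import Lia Bool.
Import ListNotations.

Inductive base := BI | BM | BC | BCR | BD1 | BD2 | BD3 | BF | BF2 | BACC | BREJ.
Inductive st := Main (x : base) | HL (x : base) | HR (x : base).

Definition all_base := [BI; BM; BC; BCR; BD1; BD2; BD3; BF; BF2; BACC; BREJ].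

Lemma st_finite : exists l : list st, forall q, In q l.
Proof.
  exists (map Main all_base ++ map HL all_base ++ map HR all_base).
  intros [x|x|x]; destruct x; simpl; tauto.
Qed.

Definition isacc (q : st) : bool := match q with Main BACC => true | _ => false end.
Definition isrej (q : st) : bool := match q with Main BREJ => true | _ => false end.

Lemma ar_disj : forall q, ~ (isacc q = true /\ isrej q = true).
Proof. intros [x|x|x]; destruct x; simpl; intuition congruence. Qed.

Definition rej : st * hmove * dmove * action := (Main BREJ, HStay, DStay, NoAction).
Definition gL (x : base) (a : action) : st * hmove * dmove * action := (HL x, HLeft, DLeft, a).
Definition gR (x : base) (a : action) : st * hmove * dmove * action := (HR x, HRight, DRight, a).

Definition mdelta (q : st) (s : tsym) (b : bool) : st * hmove * dmove * action :=
  match q with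
  | HL x => (Main x, HStay, DLeft, NoAction)
  | HR x => (Main x, HStay, DRight, NoAction)
  | Main x =>
    match x with
    | BI => match s with
            | Cent | Sym SA => gR BI NoAction
            | Sym SB => gR BM NoAction
            | Dollar => rej end
    | BM => gL BC Toggle0
    | BC => match s with
            | Sym SB => gL BC NoAction
            | Sym SA => if b then gL BC NoAction else gR BCR Toggle0
            | Cent => gR BF NoAction
            | Dollar => rej end
    | BCR => match s with
             | Cent | Sym SA => gR BCR NoAction
             | Sym SB => (Main BD1, HRight, DRight, NoAction)
             | Dollar => rej end
    | BD1 => if b then (Main BD2, HStay, DRight, Toggle0)
             else (Main BD1, HRight, DRight, NoAction)
    | BD2 => if b then match s with Sym SA => rej | _ => gL BD3 NoAction end
             else (Main BD2, HStay, DRight, NoAction)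
    | BD3 => match s with
             | Sym SB => if b then gL BC Toggle0 else gL BD3 NoAction
             | _ => rej end
    | BF => match s with
            | Cent | Sym SA => gR BF NoAction
            | Sym SB => if b then rej else gR BF2 NoAction
            | Dollar => rej end
    | BF2 => match s with
            | Sym SB => if b then rej else gR BF2 NoAction
            | Dollar => if b then (Main BACC, HStay, DLeft, NoAction) else rej
            | _ => rej end
    | BACC | BREJ => (Main x, HStay, DStay, NoAction)
    end
  end.

Definition Mach : OIA := {|
  Q := st; Q_finite := st_finite; q0 := Main BI;
  is_acc := isacc; is_rej := isrej; acc_rej_disjoint := ar_disj;
  delta := mdelta; lambda := 1; lambda_pos := Rlt_0_1;
  amp := 1; amp_pos := Rlt_0_1; dj0 := 0; dk0 := 0; kcrash := 2 |}.

Notation cfg := (config Mach).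

Section Run.
Variable w : list sym.
Local Open Scope nat_scope.

Definition Desc (c : cfg) (q : st) (h dj : nat) (mk : nat -> bool) (f : nat -> nat) (t : nat) : Prop :=
  cst Mach c = q /\ chead Mach c = h /\ cdj Mach c = dj /\ cdk Mach c = 0 /\
  (dj <= 2 * (Defs.N w + 1))%nat /\
  (forall m, src_on (csrc Mach c m) = mk m) /\
  (forall m, (ccnt Mach c m + crun Mach c m + f m <= 2)%nat) /\ ctime Mach c = t.

Definition out (mk : nat -> bool) (dj : nat) : bool :=
  if Nat.even dj then mk (Nat.div2 dj) else false.

Lemma fold_zero : forall (g : nat -> R) l, (forall m, g m = 0%R) ->
  fold_right Rplus 0%R (map g l) = 0%R.
Proof.
  intros g l H; induction l; simpl; [reflexivity|]. rewrite H, IHl; ring.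
Qed.

Lemma out_ok : forall c q h dj mk f t, Desc c q h dj mk f t -> output Mach w c (out mk dj).
Proof.
  intros c q h dj mk f t (Hq & Hh & Hdj & Hdk & Hb & Hmk & Hf & Ht).
  unfold output, resultant_nonzero, out.
  destruct (Nat.even dj) eqn:He.
  - apply Nat.even_spec in He. destruct He as [k Hk].
    assert (Hd2 : Nat.div2 dj = k) by (rewrite Hk; apply Nat.div2_double).
    rewrite Hd2. split.
    + intros Hm. left. exists k. repeat split.
      * unfold sources. apply in_seq. lia.
      * rewrite Hdj, Hdk. unfold visible. apply andb_true_intro; split; apply Nat.leb_le; lia.
      * rewrite Hmk; exact Hm.
      * rewrite Hdj, Hdk. unfold Defs.dist. rewrite Hk.
        replace (INR (2 * k) - INR (2 * k))%R with 0%R by ring.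
        replace ((0 / 2) ^ 2 + (INR 0 / 2) ^ 2)%R with 0%R by (simpl; field).
        apply sqrt_0.
    + intros [(m & Hin & Hv & Hon & _) | [Hr | Hr]].
      * rewrite Hdj, Hdk in Hv. unfold visible in Hv. apply andb_true_iff in Hv.
        destruct Hv as [H1 H2]. apply Nat.leb_le in H1, H2.
        assert (m = k) by lia. subst m. rewrite <- Hmk; exact Hon.
      * destruct (mk k) eqn:Ek; [reflexivity|]. exfalso; apply Hr.
        unfold resultant_re. apply fold_zero. intros m. unfold contrib_re.
        rewrite Hdj, Hdk, Hmk. unfold visible.
        destruct (Nat.eqb_spec m k).
        { subst; rewrite Ek, andb_false_r; reflexivity. }
        destruct ((2 * m <=? dj + 0) && (dj <=? 2 * m + 0))%nat eqn:E; [|reflexivity].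
        apply andb_true_iff in E; destruct E as [E1 E2]; apply Nat.leb_le in E1, E2; lia.
      * destruct (mk k) eqn:Ek; [reflexivity|]. exfalso; apply Hr.
        unfold resultant_im. apply fold_zero. intros m. unfold contrib_im.
        rewrite Hdj, Hdk, Hmk. unfold visible.
        destruct (Nat.eqb_spec m k).
        { subst; rewrite Ek, andb_false_r; reflexivity. }
        destruct ((2 * m <=? dj + 0) && (dj <=? 2 * m + 0))%nat eqn:E; [|reflexivity].
        apply andb_true_iff in E; destruct E as [E1 E2]; apply Nat.leb_le in E1, E2; lia.
  - split; [discriminate|].
    assert (Hv : forall m, visible (cdj Mach c) (cdk Mach c) m = false).
    { intros m. rewrite Hdj, Hdk. unfold visible.
      destruct ((2 * m <=? dj + 0) && (dj <=? 2 * m + 0))%nat eqn:E; [|reflexivity].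
      apply andb_true_iff in E; destruct E as [E1 E2]; apply Nat.leb_le in E1, E2.
      assert (dj = 2 * m)%nat by lia. rewrite H in He. rewrite Nat.even_mul in He. discriminate. }
    intros [(m & Hin & Hv' & _) | [Hr | Hr]].
    + rewrite Hv in Hv'; discriminate.
    + exfalso; apply Hr. unfold resultant_re. apply fold_zero. intros m. unfold contrib_re. rewrite Hv. reflexivity.
    + exfalso; apply Hr. unfold resultant_im. apply fold_zero. intros m. unfold contrib_im. rewrite Hv. reflexivity.
Qed.


Lemma move_det_grid : forall dj dk dm j k, move_det w dj dk dm = Some (j, k) ->
  j <= 2 * (Defs.N w + 1).
Proof.
  intros dj dk dm j k H. unfold move_det in H.
  destruct dm; [destruct dj| | |destruct dk|]; cbn beta iota in H; try discriminate;
  match type of H with context [in_grid w ?a ?b] => destruct (in_grid w a b) eqn:E end;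
  try discriminate;
  injection H; intros; subst; unfold in_grid in E; apply andb_true_iff in E;
  destruct E as [E _]; apply Nat.leb_le in E; exact E.
Qed.

Definition G (Qp : bool -> nat -> Prop) (c : cfg) : Prop :=
  exists r t, halts_from Mach w c r t /\ Qp r t.

Definition istog (a : action) (h m : nat) : bool :=
  match a with NoAction => false | _ => m =? h end.
Definition tmk a h (mk : nat -> bool) m := if istog a h m then negb (mk m) else mk m.
Definition tf a h (f : nat -> nat) m := if istog a h m then f m - 1 else f m.

Lemma odd_le : forall k, (if Nat.odd k then 1 else 0) <= k.
Proof. intros [|k]; [reflexivity|]. destruct (Nat.odd (S k)); lia. Qed.

Lemma gstep : forall c q h dj mk f t q' hm dm a h' dj' Qp,
  Desc c q h dj mk f t ->
  isacc q || isrej q = false ->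
  mdelta q (tape w h) (out mk dj) = (q', hm, dm, a) ->
  move_head w h hm = Some h' ->
  move_det w dj 0 dm = Some (dj', 0) ->
  (a <> NoAction -> 1 <= f h) ->
  (forall c', Desc c' q' h' dj' (tmk a h mk) (tf a h f) (t + hcost hm + dcost dm) -> G Qp c') ->
  G Qp c.
Proof.
  intros c q h dj mk f t q' hm dm a h' dj' Qp HD Hhalt Hdel Hmh Hmd Hfa K.
  pose proof (out_ok _ _ _ _ _ _ _ HD) as Hout.
  destruct HD as (Hq & Hh & Hdj & Hdk & Hb & Hmk & Hf & Ht).
  assert (Hd : delta Mach (cst Mach c) (tape w (chead Mach c)) (out mk dj) = (q', hm, dm, a))
    by (rewrite Hq, Hh; exact Hdel).
  set (tog := fun m => match a with NoAction => false | _ => Nat.eqb m h end).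
  set (c' := {| cst := (q' : Q Mach); chead := h'; cdj := dj'; cdk := 0;
    csrc := fun m => if tog m then match a with Toggle0 => toggle On0 (csrc Mach c m)
                                    | _ => toggle OnPi (csrc Mach c m) end
                     else csrc Mach c m;
    crun := fun m => if tog m then S (crun Mach c m) else O;
    ccnt := fun m => if tog m then ccnt Mach c m
                     else (ccnt Mach c m + (if Nat.odd (crun Mach c m) then 1 else 0));
    ctime := (ctime Mach c + hcost hm + dcost dm) |} : cfg).
  assert (Hstep : step Mach w c (out mk dj) = Next Mach c').
  { unfold step. rewrite Hd. rewrite Hh.
    match goal with |- context [existsb ?p ?l] => destruct (existsb p l) eqn:Ex end.
    - exfalso. apply existsb_exists in Ex. destruct Ex as (m & _ & Hm).
      apply Nat.ltb_lt in Hm. simpl in Hm. specialize (Hf m).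
      pose proof (odd_le (crun Mach c m)).
      destruct a; simpl in Hm; try lia; destruct (m =? h); lia.
    - rewrite Hmh, Hdj, Hdk, Hmd. reflexivity. }
  destruct (K c') as (r & t' & Hh' & HQ).
  { unfold Desc; simpl. repeat split.
    - pose proof (move_det_grid _ _ _ _ _ Hmd). lia.
    - intros m. unfold tmk, istog. subst tog; simpl. rewrite <- Hmk.
      destruct a; simpl; try reflexivity; destruct (m =? h); try reflexivity;
      destruct (csrc Mach c m); reflexivity.
    - intros m. unfold tf, istog. subst tog; simpl. specialize (Hf m).
      pose proof (odd_le (crun Mach c m)).
      destruct a; simpl; try lia; destruct (Nat.eqb_spec m h); try lia;
      subst; specialize (Hfa ltac:(discriminate)); lia.
    - rewrite Ht; reflexivity. }
  exists r, t'. split; [|exact HQ].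
  eapply HaltStep; [ | exact Hout | exact Hstep | exact Hh'].
  unfold halting. rewrite Hq. exact Hhalt.
Qed.


Lemma Desc_weaken : forall c q h dj mk f t mk' f',
  Desc c q h dj mk f t -> (forall m, mk m = mk' m) -> (forall m, f' m <= f m) ->
  Desc c q h dj mk' f' t.
Proof.
  intros c q h dj mk f t mk' f' (Hq & Hh & Hdj & Hdk & Hb & Hmk & Hf & Ht) E L.
  repeat split; auto.
  - intros m; rewrite Hmk; apply E.
  - intros m; specialize (Hf m); specialize (L m); lia.
Qed.

Lemma halt_rej : forall c h dj mk f t Qp, Desc c (Main BREJ) h dj mk f t -> Qp false t -> G Qp c.
Proof.
  intros c h dj mk f t Qp HD HQ. pose proof (out_ok _ _ _ _ _ _ _ HD) as Ho.
  destruct HD as (Hq & _ & _ & _ & _ & _ & _ & Ht).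
  exists false, t. split; [|exact HQ].
  pose proof (HaltStop Mach w c _ ltac:(unfold halting; rewrite Hq; reflexivity) Ho) as H.
  rewrite Hq, Ht in H. exact H.
Qed.

Lemma halt_acc : forall c h dj mk f t Qp, Desc c (Main BACC) h dj mk f t ->
  out mk dj = false -> Qp true t -> G Qp c.
Proof.
  intros c h dj mk f t Qp HD Hb HQ. pose proof (out_ok _ _ _ _ _ _ _ HD) as Ho.
  destruct HD as (Hq & _ & _ & _ & _ & _ & Hf & Ht).
  exists true, t. split; [|exact HQ].
  pose proof (HaltStop Mach w c _ ltac:(unfold halting; rewrite Hq; reflexivity) Ho) as H.
  rewrite Hq, Ht, Hb in H.
  assert (Hfo : final_ok Mach w c = true).
  { unfold final_ok. apply negb_true_iff.
    destruct (existsb _ _) eqn:Ex; [|reflexivity].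
    apply existsb_exists in Ex. destruct Ex as (m & _ & Hm). apply Nat.ltb_lt in Hm.
    simpl in Hm. specialize (Hf m). pose proof (odd_le (crun Mach c m)). lia. }
  rewrite Hfo in H. exact H.
Qed.

Lemma crash_step : forall c q h dj mk f t q' hm dm a Qp,
  Desc c q h dj mk f t -> isacc q || isrej q = false ->
  mdelta q (tape w h) (out mk dj) = (q', hm, dm, a) ->
  move_head w h hm = None -> Qp false t -> G Qp c.
Proof.
  intros c q h dj mk f t q' hm dm a Qp HD Hhalt Hdel Hmh HQ.
  pose proof (out_ok _ _ _ _ _ _ _ HD) as Ho.
  destruct HD as (Hq & Hh & Hdj & Hdk & Hb & Hmk & Hf & Ht).
  exists false, t. split; [|exact HQ].
  rewrite <- Ht. eapply HaltCrash; [unfold halting; rewrite Hq; exact Hhalt | exact Ho |].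
  unfold step. rewrite Hq, Hh. change (delta Mach q) with (mdelta q). rewrite Hdel.
  destruct (existsb _ _); [reflexivity|]. rewrite Hmh. reflexivity.
Qed.

Lemma mh_right : forall h, h < Defs.N w + 1 -> move_head w h HRight = Some (S h).
Proof. intros h H. unfold move_head. apply Nat.ltb_lt in H. rewrite H. reflexivity. Qed.

Lemma md_right : forall dj, S dj <= 2 * (Defs.N w + 1) -> move_det w dj 0 DRight = Some (S dj, 0).
Proof.
  intros dj H. unfold move_det, in_grid. apply Nat.leb_le in H. rewrite H. reflexivity.
Qed.

Lemma md_left : forall dj, dj <= 2 * (Defs.N w + 1) -> move_det w (S dj) 0 DLeft = Some (dj, 0).
Proof.
  intros dj H. unfold move_det, in_grid. apply Nat.leb_le in H. rewrite H. reflexivity.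
Qed.

Lemma md_stay : forall dj, dj <= 2 * (Defs.N w + 1) -> move_det w dj 0 DStay = Some (dj, 0).
Proof.
  intros dj H. unfold move_det, in_grid. apply Nat.leb_le in H. rewrite H. reflexivity.
Qed.

Lemma out_even : forall mk i, out mk (2 * i) = mk i.
Proof. intros mk i. unfold out. rewrite Nat.even_mul, Nat.div2_double. reflexivity. Qed.

Lemma out_odd : forall mk i, out mk (S (2 * i)) = false.
Proof. intros mk i. unfold out. rewrite Nat.even_succ, Nat.odd_mul. reflexivity. Qed.

Lemma to_rej : forall c q h dj mk f t Qp,
  Desc c q h dj mk f t -> isacc q || isrej q = false ->
  mdelta q (tape w h) (out mk dj) = rej -> Qp false t -> G Qp c.
Proof.
  intros c q h dj mk f t Qp HD Hhalt Hdel HQ.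
  eapply gstep; [exact HD | exact Hhalt | exact Hdel | reflexivity | | intros Hc; exfalso; apply Hc; reflexivity |].
  - apply md_stay. destruct HD as (_ & _ & _ & _ & Hb & _). exact Hb.
  - intros c' HD'. eapply halt_rej; [exact HD'|]. simpl. rewrite !Nat.add_0_r. exact HQ.
Qed.


Ltac gs q' hm dm a h' dj' :=
  eapply (gstep _ _ _ _ _ _ _ q' hm dm a h' dj'); [eassumption | first [reflexivity | eassumption] | | | | |].

Lemma notog : forall (f : nat -> nat) h, NoAction <> NoAction -> 1 <= f h.
Proof. intros f h H; exfalso; apply H; reflexivity. Qed.

Lemma walkL : forall x Qp mk f lo k c t,
  isacc (Main x) || isrej (Main x) = false ->
  (forall i, lo < i <= lo + k -> mdelta (Main x) (tape w i) (mk i) = gL x NoAction) ->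
  lo + k <= Defs.N w + 1 ->
  Desc c (Main x) (lo + k) (2 * (lo + k)) mk f t ->
  (forall c', Desc c' (Main x) lo (2 * lo) mk f (t + 3 * k) -> G Qp c') -> G Qp c.
Proof.
  intros x Qp mk f lo k. induction k as [|k IH]; intros c t Hx Hd Hb HD K.
  - apply K. rewrite Nat.add_0_r in HD. rewrite Nat.mul_0_r, Nat.add_0_r. exact HD.
  - gs (HL x) HLeft DLeft NoAction (lo + k) (S (2 * (lo + k))).
    + rewrite out_even. apply Hd. lia.
    + replace (lo + S k) with (S (lo + k)) by lia. reflexivity.
    + replace (2 * (lo + S k)) with (S (S (2 * (lo + k)))) by lia. apply md_left. lia.
    + apply notog.
    + intros c1 HD1.
      gs (Main x) HStay DLeft NoAction (lo + k) (2 * (lo + k)).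
      * reflexivity.
      * reflexivity.
      * apply md_left. lia.
      * apply notog.
      * intros c2 HD2. eapply IH; [exact Hx | | lia | |].
        -- intros i Hi. apply Hd. lia.
        -- eapply Desc_weaken; [exact HD2 | reflexivity | reflexivity].
        -- intros c' HD'. apply K. replace (t + 3 * S k) with (t + hcost HLeft + dcost DLeft + hcost HStay + dcost DLeft + 3 * k) by (simpl; lia). exact HD'.
Qed.

Lemma walkR : forall x Qp mk f k lo c t,
  isacc (Main x) || isrej (Main x) = false ->
  (forall i, lo <= i < lo + k -> mdelta (Main x) (tape w i) (mk i) = gR x NoAction) ->
  lo + k <= Defs.N w + 1 ->
  Desc c (Main x) lo (2 * lo) mk f t ->
  (forall c', Desc c' (Main x) (lo + k) (2 * (lo + k)) mk f (t + 3 * k) -> G Qp c') -> G Qp c.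
Proof.
  intros x Qp mk f k. induction k as [|k IH]; intros lo c t Hx Hd Hb HD K.
  - apply K. rewrite !Nat.add_0_r. exact HD.
  - gs (HR x) HRight DRight NoAction (S lo) (S (2 * lo)).
    + rewrite out_even. apply Hd. lia.
    + apply mh_right. lia.
    + apply md_right. lia.
    + apply notog.
    + intros c1 HD1.
      gs (Main x) HStay DRight NoAction (S lo) (2 * S lo).
      * reflexivity.
      * reflexivity.
      * replace (2 * S lo) with (S (S (2 * lo))) by lia. apply md_right. lia.
      * apply notog.
      * intros c2 HD2. eapply (IH (S lo)); [exact Hx | | lia | |].
        -- intros i Hi. apply Hd. lia.
        -- eapply Desc_weaken; [exact HD2 | reflexivity | reflexivity].
        -- intros c' HD'. apply K. replace (lo + S k) with (S lo + k) by lia.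
           replace (t + 3 * S k) with (t + hcost HRight + dcost DRight + hcost HStay + dcost DRight + 3 * k) by (simpl; lia). exact HD'.
Qed.

Lemma D1walk : forall Qp mk f k h dj c t,
  (forall i, i < k -> out mk (dj + i) = false) ->
  h + k <= Defs.N w + 1 -> dj + k <= 2 * (Defs.N w + 1) ->
  Desc c (Main BD1) h dj mk f t ->
  (forall c', Desc c' (Main BD1) (h + k) (dj + k) mk f (t + 2 * k) -> G Qp c') -> G Qp c.
Proof.
  intros Qp mk f k. induction k as [|k IH]; intros h dj c t Ho Hb1 Hb2 HD K.
  - apply K. rewrite !Nat.add_0_r. exact HD.
  - gs (Main BD1) HRight DRight NoAction (S h) (S dj).
    + assert (E : out mk dj = false) by (rewrite <- (Nat.add_0_r dj); apply Ho; lia).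
      simpl. rewrite E. reflexivity.
    + apply mh_right. lia.
    + apply md_right. lia.
    + apply notog.
    + intros c1 HD1. eapply (IH (S h) (S dj)); [ | lia | lia | |].
      * intros i Hi. replace (S dj + i) with (dj + S i) by lia. apply Ho. lia.
      * eapply Desc_weaken; [exact HD1 | reflexivity | reflexivity].
      * intros c' HD'. apply K. replace (h + S k) with (S h + k) by lia. replace (dj + S k) with (S dj + k) by lia.
        replace (t + 2 * S k) with (t + hcost HRight + dcost DRight + 2 * k) by (simpl; lia). exact HD'.
Qed.

Lemma D2walk : forall Qp mk f k h dj c t,
  (forall i, i < k -> out mk (dj + i) = false) ->
  dj + k <= 2 * (Defs.N w + 1) ->
  Desc c (Main BD2) h dj mk f t ->
  (forall c', Desc c' (Main BD2) h (dj + k) mk f (t + k) -> G Qp c') -> G Qp c.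
Proof.
  intros Qp mk f k. induction k as [|k IH]; intros h dj c t Ho Hb2 HD K.
  - apply K. rewrite !Nat.add_0_r. exact HD.
  - gs (Main BD2) HStay DRight NoAction h (S dj).
    + assert (E : out mk dj = false) by (rewrite <- (Nat.add_0_r dj); apply Ho; lia).
      simpl. rewrite E. reflexivity.
    + reflexivity.
    + apply md_right. lia.
    + apply notog.
    + intros c1 HD1. eapply (IH h (S dj)); [ | lia | |].
      * intros i Hi. replace (S dj + i) with (dj + S i) by lia. apply Ho. lia.
      * eapply Desc_weaken; [exact HD1 | reflexivity | reflexivity].
      * intros c' HD'. apply K. replace (dj + S k) with (S dj + k) by lia.
        replace (t + S k) with (t + hcost HStay + dcost DRight + k) by (simpl; lia). exact HD'.
Qed.

End Run.
Local Open Scope nat_scope.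
Ltac gs q' hm dm a h' dj' :=
  eapply (gstep _ _ _ _ _ _ _ _ q' hm dm a h' dj'); [eassumption | first [reflexivity | eassumption] | | | | |].

Lemma out_false : forall mk d, (forall p, d = 2 * p -> mk p = false) -> out mk d = false.
Proof.
  intros mk d H. unfold out. destruct (Nat.even d) eqn:E; [|reflexivity].
  apply Nat.even_spec in E. destruct E as [p Hp]. rewrite Hp, Nat.div2_double. apply H. exact Hp.
Qed.

Lemma sq_le : forall n, n * n <= 2 * 2 ^ n.
Proof.
  induction n as [|n IH]; [simpl; lia|].
  destruct (le_lt_dec n 2) as [H|H].
  - destruct n as [|[|[|n]]]; simpl; lia.
  - rewrite Nat.pow_succ_r'. nia.
Qed.

Lemma lin_le : forall n, n <= 2 ^ n.
Proof. induction n; [simpl; lia|]. rewrite Nat.pow_succ_r'. pose proof (Nat.pow_nonzero 2 n). lia. Qed.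

Lemma pow_pos : forall n, 1 <= 2 ^ n.
Proof. intros n. pose proof (Nat.pow_nonzero 2 n ltac:(lia)). lia. Qed.

Lemma pow_mono : forall a b, a <= b -> 2 ^ a <= 2 ^ b.
Proof. intros. apply Nat.pow_le_mono_r; lia. Qed.

Lemma repeat_nth : forall (l : list sym) x, (forall k, k < length l -> nth k l SA = x) -> l = repeat x (length l).
Proof.
  induction l as [|y l IH]; intros x H; [reflexivity|]. simpl.
  rewrite (H 0 ltac:(simpl; lia)) at 1. simpl in *. f_equal.
  apply IH. intros k Hk. apply (H (S k)). lia.
Qed.

Ltac bsolve := repeat match goal with
  | |- context [?x =? ?y] => destruct (Nat.eqb_spec x y)
  | |- context [?x <? ?y] => destruct (Nat.ltb_spec x y)
  | |- context [?x <=? ?y] => destruct (Nat.leb_spec x y) end;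
  simpl; try reflexivity; try lia.

Lemma mh_left' : forall w h, 0 < h -> move_head w h HLeft = Some (h - 1).
Proof. intros w [|h] H; [lia|]. simpl. rewrite Nat.sub_0_r. reflexivity. Qed.

Lemma md_left' : forall w dj, 0 < dj -> dj - 1 <= 2 * (Defs.N w + 1) -> move_det w dj 0 DLeft = Some (dj - 1, 0).
Proof. intros w [|dj] H1 H2; [lia|]. simpl in *. rewrite Nat.sub_0_r in *. apply md_left. exact H2. Qed.

Lemma mh_none : forall w, move_head w (Defs.N w + 1) HRight = None.
Proof. intros w. unfold move_head. rewrite Nat.ltb_irrefl. reflexivity. Qed.

Lemma top_bad : forall (P : nat -> bool) lo k,
  (forall i, lo < i <= lo + k -> P i = true) \/
  (exists p, lo < p <= lo + k /\ P p = false /\ forall i, p < i <= lo + k -> P i = true).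
Proof.
  intros P lo k. induction k as [|k IH].
  - left. intros i Hi. lia.
  - destruct (P (lo + S k)) eqn:E.
    + destruct IH as [IH|(p & Hp & Pp & Hi)].
      * left. intros i Hi. destruct (Nat.eq_dec i (lo + S k)); [subst; exact E|]. apply IH. lia.
      * right. exists p. split; [lia|]. split; [exact Pp|]. intros i Hi'.
        destruct (Nat.eq_dec i (lo + S k)); [subst; exact E|]. apply Hi. lia.
    + right. exists (lo + S k). split; [lia|]. split; [exact E|]. intros i Hi. lia.
Qed.

Definition isSB (x : tsym) : bool := match x with Sym SB => true | _ => false end.

Section Main.
Variable n : nat.
Variable rest : list sym.
Hypothesis Hrest : rest = [] \/ exists r', rest = SB :: r'.

Definition ww := repeat SA n ++ rest.

Lemma NN_eq : Defs.N ww = n + length rest.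
Proof. unfold Defs.N, ww. rewrite length_app, repeat_length. reflexivity. Qed.

Lemma tape_a : forall i, 1 <= i <= n -> tape ww i = Sym SA.
Proof.
  intros [|i] Hi; [lia|]. unfold tape. rewrite NN_eq.
  replace (i <? n + length rest) with true by (symmetry; apply Nat.ltb_lt; lia).
  unfold ww. rewrite app_nth1 by (rewrite repeat_length; lia). rewrite nth_repeat. reflexivity.
Qed.

Lemma tape_r : forall k, k < length rest -> tape ww (n + 1 + k) = Sym (nth k rest SA).
Proof.
  intros k Hk. replace (n + 1 + k) with (S (n + k)) by lia. unfold tape. rewrite NN_eq.
  replace (n + k <? n + length rest) with true by (symmetry; apply Nat.ltb_lt; lia).
  unfold ww. rewrite app_nth2 by (rewrite repeat_length; lia). rewrite repeat_length.
  replace (n + k - n) with k by lia. reflexivity.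
Qed.

Lemma tape_dollar : tape ww (Defs.N ww + 1) = Dollar.
Proof.
  rewrite Nat.add_1_r. unfold tape. replace (Defs.N ww <? Defs.N ww) with false by (symmetry; apply Nat.ltb_ge; lia). reflexivity.
Qed.

Lemma tape_in : forall i, 1 <= i <= Defs.N ww -> tape ww i = Sym SA \/ tape ww i = Sym SB.
Proof.
  intros [|i] Hi; [lia|]. unfold tape. replace (i <? Defs.N ww) with true by (symmetry; apply Nat.ltb_lt; lia).
  destruct (nth i ww SA); auto.
Qed.

Lemma tape_allb : rest = repeat SB (2 ^ n) -> forall i, n + 1 <= i <= Defs.N ww -> tape ww i = Sym SB.
Proof.
  intros E i Hi. rewrite NN_eq in Hi. replace i with (n + 1 + (i - n - 1)) by lia.
  rewrite tape_r by lia. rewrite E.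
  rewrite (nth_indep _ SA SB) by (rewrite repeat_length; rewrite E, repeat_length in Hi; lia).
  rewrite nth_repeat. reflexivity.
Qed.

Lemma N_allb : rest = repeat SB (2 ^ n) -> Defs.N ww = n + 2 ^ n.
Proof. intros E. rewrite NN_eq, E, repeat_length. reflexivity. Qed.


Definition MK1 lo T m := ((lo <? m) && (m <=? n)) || (m =? T).
Definition MK2 lo T T2 m := MK1 lo T m || (m =? T2).
Definition FB lo T m := if m <=? n then (if lo <? m then 0 else 1)
  else if m <? T then 0 else if m =? T then 1 else 2.
Definition FB2 lo T T2 m := if m <=? n then (if lo <? m then 0 else 1)
  else if m <? T then 0 else if m =? T then 1 else if m =? T2 then 1 else 2.
Definition Qp (r : bool) (t : nat) := t <= 60 * 2 ^ n /\ (r = true <-> rest = repeat SB (2 ^ n)).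
Definition TB j := 3 * n + 12 + 3 * j * j + 6 * j + 12 * 2 ^ j.

Lemma rest_of_tape : forall T, T = n + 1 + 2 ^ n -> tape ww T = Dollar ->
  (forall i, n + 1 <= i < T -> tape ww i = Sym SB) -> rest = repeat SB (2 ^ n).
Proof.
  intros T ET HT Hb.
  assert (HN : T = Defs.N ww + 1).
  { destruct (le_lt_dec T (Defs.N ww)) as [H|H].
    - pose proof (tape_in T ltac:(lia)) as [E|E]; rewrite HT in E; discriminate.
    - assert (T <= Defs.N ww + 1).
      { destruct (le_lt_dec T (Defs.N ww + 1)) as [H'|H']; [exact H'|].
        exfalso. pose proof (Hb (Defs.N ww + 1) ltac:(rewrite NN_eq in *; lia)). rewrite tape_dollar in H0. discriminate. }
      lia. }
  rewrite NN_eq in HN. assert (EL : length rest = 2 ^ n) by lia.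
  rewrite <- EL. apply repeat_nth. intros k Hk.
  pose proof (Hb (n + 1 + k) ltac:(lia)) as E. rewrite tape_r in E by lia. injection E; auto.
Qed.

Lemma final_phase : forall c t,
  Desc ww c (Main BC) n (2 * n) (MK1 0 (n + 1 + 2 ^ n)) (FB 0 (n + 1 + 2 ^ n)) t ->
  t <= TB n ->
  (forall i, n + 1 <= i < n + 1 + 2 ^ n -> tape ww i = Sym SB) ->
  n + 1 + 2 ^ n <= Defs.N ww + 1 -> G ww Qp c.
Proof.
  intros c t HD Ht Hb HT.
  pose proof (pow_pos n). pose proof (sq_le n). pose proof (lin_le n).
  remember (n + 1 + 2 ^ n) as T eqn:ET.
  eapply (walkL ww BC Qp (MK1 0 T) (FB 0 T) 0 n); [reflexivity | | lia | exact HD | ].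
  { intros i Hi. rewrite tape_a by lia. unfold MK1. bsolve. }
  intros c1 HD1.
  gs (HR BF) HRight DRight NoAction 1 1; [reflexivity | apply mh_right; lia | apply md_right; lia | apply notog |].
  intros c2 HD2.
  gs (Main BF) HStay DRight NoAction 1 2; [reflexivity | reflexivity | apply md_right; lia | apply notog |].
  intros c3 HD3.
  eapply (walkR ww BF Qp (MK1 0 T) (FB 0 T) n 1); [reflexivity | | lia | eapply Desc_weaken; [exact HD3 | reflexivity | reflexivity] |].
  { intros i Hi. rewrite tape_a by lia. reflexivity. }
  intros c4 HD4.
  gs (HR BF2) HRight DRight NoAction (S (1 + n)) (S (2 * (1 + n))).
  { rewrite out_even. rewrite Hb by lia. unfold MK1. bsolve. }
  { apply mh_right. lia. }
  { apply md_right. lia. }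
  { apply notog. }
  intros c5 HD5.
  gs (Main BF2) HStay DRight NoAction (S (1 + n)) (2 * S (1 + n)); [reflexivity | reflexivity | replace (2 * S (1 + n)) with (S (S (2 * (1 + n)))) by lia; apply md_right; lia | apply notog |].
  intros c6 HD6.
  eapply (walkR ww BF2 Qp (MK1 0 T) (FB 0 T) (2 ^ n - 1) (S (1 + n))); [reflexivity | | lia | eapply Desc_weaken; [exact HD6 | reflexivity | reflexivity] |].
  { intros i Hi. rewrite Hb by lia. unfold MK1. bsolve. }
  intros c7 HD7. replace (S (1 + n) + (2 ^ n - 1)) with T in HD7 by lia.
  destruct (tape ww T) as [ | | [|] ] eqn:ETT.
  - eapply to_rej; [exact HD7 | reflexivity | rewrite ETT, out_even; unfold MK1; bsolve |].
    unfold Qp. cbn [hcost dcost]. split; [unfold TB in Ht; nia|].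
    split; [discriminate|]. intros E. exfalso. pose proof (N_allb E). assert (E2 : T = Defs.N ww + 1) by lia. rewrite E2, tape_dollar in ETT. discriminate.
  - gs (Main BACC) HStay DLeft NoAction T (2 * T - 1).
    { rewrite ETT, out_even. unfold MK1. rewrite Nat.eqb_refl, orb_true_r. reflexivity. }
    { reflexivity. }
    { pose proof (md_left ww (2 * T - 1) ltac:(lia)) as E3.
      replace (S (2 * T - 1)) with (2 * T) in E3 by lia. exact E3. }
    { apply notog. }
    intros c8 HD8. eapply halt_acc; [exact HD8 | |].
    { replace (2 * T - 1) with (S (2 * (T - 1))) by lia. apply out_odd. }
    unfold Qp. cbn [hcost dcost]. split; [unfold TB in Ht; nia|].
    split; [|reflexivity]. intros _. eapply rest_of_tape; eauto.
  - eapply to_rej; [exact HD7 | reflexivity | rewrite ETT, out_even; unfold MK1; bsolve |].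
    unfold Qp. cbn [hcost dcost]. split; [unfold TB in Ht; nia|].
    split; [discriminate|]. intros E. exfalso. pose proof (N_allb E). assert (E2 : T = Defs.N ww + 1) by lia. rewrite E2, tape_dollar in ETT. discriminate.
  - eapply to_rej; [exact HD7 | reflexivity | rewrite ETT, out_even; unfold MK1; bsolve |].
    unfold Qp. cbn [hcost dcost]. split; [unfold TB in Ht; nia|].
    split; [discriminate|]. intros E. exfalso. pose proof (N_allb E). assert (E2 : T = Defs.N ww + 1) by lia. rewrite E2, tape_dollar in ETT. discriminate.
Qed.

Lemma Qp_f : forall t, t <= 60 * 2 ^ n -> (rest = repeat SB (2 ^ n) -> False) -> Qp false t.
Proof. intros t Ht H. split; [exact Ht|]. split; [discriminate|]. intros E; exfalso; auto. Qed.

Lemma tbound : forall j t x, j < n -> t <= TB j -> x <= t + 6 * j + 12 * 2 ^ j + 6 -> x <= 60 * 2 ^ n.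
Proof.
  intros j t x Hj Ht Hx. unfold TB in Ht.
  pose proof (pow_mono (S j) n Hj). rewrite Nat.pow_succ_r' in H.
  pose proof (sq_le n). pose proof (lin_le n). pose proof (pow_pos n).
  assert (j * j <= n * n) by nia. nia.
Qed.

Lemma tstep : forall j t x, t <= TB j -> x <= t + 6 * j + 12 * 2 ^ j + 6 -> x <= TB (S j).
Proof. intros j t x Ht Hx. unfold TB in *. rewrite Nat.pow_succ_r'. nia. Qed.

Lemma allb_tape2 : rest = repeat SB (2 ^ n) -> forall i, n + 1 <= i <= Defs.N ww ->
  tape ww i = Sym SB.
Proof. apply tape_allb. Qed.

Lemma round_step : forall j c t, j < n ->
  Desc ww c (Main BC) n (2 * n) (MK1 (n - j) (n + 1 + 2 ^ j)) (FB (n - j) (n + 1 + 2 ^ j)) t ->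
  t <= TB j ->
  (forall i, n + 1 <= i < n + 1 + 2 ^ j -> tape ww i = Sym SB) ->
  n + 1 + 2 ^ j <= Defs.N ww + 1 ->
  (forall c' t', Desc ww c' (Main BC) n (2 * n) (MK1 (n - S j) (n + 1 + 2 ^ S j))
       (FB (n - S j) (n + 1 + 2 ^ S j)) t' -> t' <= TB (S j) ->
     (forall i, n + 1 <= i < n + 1 + 2 ^ S j -> tape ww i = Sym SB) ->
     n + 1 + 2 ^ S j <= Defs.N ww + 1 -> G ww Qp c') ->
  G ww Qp c.
Proof.
  intros j c t Hj HD Ht Hb HT K.
  pose proof (pow_mono (S j) n Hj) as HLn. rewrite Nat.pow_succ_r' in HLn.
  pose proof (pow_pos j) as HL1.
  rewrite Nat.pow_succ_r' in K.
  remember (2 ^ j) as L eqn:EL.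
  remember (n - j) as a eqn:Ea.
  remember (n + 1 + L) as T eqn:ET.
  remember (n + 1 + 2 * L) as T2 eqn:ET2.
  replace (n - S j) with (a - 1) in K by lia.
  eapply (walkL ww BC Qp (MK1 a T) (FB a T) a j); [reflexivity | | lia | replace (a + j) with n by lia; exact HD |].
  { intros i Hi. rewrite tape_a by lia. unfold MK1. bsolve. }
  intros c1 HD1.
  gs (HR BCR) HRight DRight Toggle0 (S a) (S (2 * a)).
  { rewrite out_even, tape_a by lia. unfold MK1. bsolve. }
  { apply mh_right. lia. }
  { apply md_right. lia. }
  { intros _. unfold FB. bsolve. }
  intros c2 HD2.
  gs (Main BCR) HStay DRight NoAction (S a) (2 * S a); [reflexivity | reflexivity | replace (2 * S a) with (S (S (2 * a))) by lia; apply md_right; lia | apply notog |].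
  intros c3 HD3.
  eapply (walkR ww BCR Qp (MK1 (a - 1) T) (FB (a - 1) T) j (S a)); [reflexivity | | lia | |].
  { intros i Hi. rewrite tape_a by lia. reflexivity. }
  { eapply Desc_weaken; [exact HD3 | |]; intros m; unfold tmk, tf, istog, MK1, FB; bsolve. }
  intros c4 HD4. replace (S a + j) with (n + 1) in HD4 by lia.
  gs (Main BD1) HRight DRight NoAction (S (n + 1)) (S (2 * (n + 1))).
  { rewrite out_even, Hb by lia. reflexivity. }
  { apply mh_right. lia. }
  { apply md_right. lia. }
  { apply notog. }
  intros c5 HD5.
  destruct (le_lt_dec T2 (Defs.N ww + 1)) as [HT2|HT2].
  2:{
    assert (HnN : n + 1 <= Defs.N ww) by lia.
    eapply (D1walk ww Qp (MK1 (a - 1) T) (FB (a - 1) T) (Defs.N ww - (n + 1)) (S (n + 1)) (S (2 * (n + 1)))); [ | lia | lia | eapply Desc_weaken; [exact HD5 | reflexivity | reflexivity] |].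
    { intros i Hi. apply out_false. intros p Hp. unfold MK1. bsolve. }
    intros c6 HD6. replace (S (n + 1) + (Defs.N ww - (n + 1))) with (Defs.N ww + 1) in HD6 by lia.
    eapply crash_step; [exact HD6 | reflexivity | | apply mh_none |].
    { assert (E : out (MK1 (a - 1) T) (S (2 * (n + 1)) + (Defs.N ww - (n + 1))) = false).
      { apply out_false. intros p Hp. unfold MK1. bsolve. }
      rewrite E. reflexivity. }
    apply Qp_f.
    - eapply tbound; [exact Hj | exact Ht | cbn [hcost dcost]; lia].
    - intros E. pose proof (N_allb E). lia. }
  eapply (D1walk ww Qp (MK1 (a - 1) T) (FB (a - 1) T) (2 * L - 1) (S (n + 1)) (S (2 * (n + 1)))); [ | lia | lia | eapply Desc_weaken; [exact HD5 | reflexivity | reflexivity] |].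
  { intros i Hi. apply out_false. intros p Hp. unfold MK1. bsolve. }
  intros c6 HD6.
  replace (S (n + 1) + (2 * L - 1)) with T2 in HD6 by lia.
  replace (S (2 * (n + 1)) + (2 * L - 1)) with (2 * T) in HD6 by lia.
  gs (Main BD2) HStay DRight Toggle0 T2 (S (2 * T)).
  { rewrite out_even. unfold MK1. rewrite Nat.eqb_refl, orb_true_r. reflexivity. }
  { reflexivity. }
  { apply md_right. lia. }
  { intros _. unfold FB. bsolve. }
  intros c7 HD7.
  eapply (D2walk ww Qp (MK2 (a - 1) T T2) (FB2 (a - 1) T T2) (2 * L - 1) T2 (S (2 * T))); [ | lia | |].
  { intros i Hi. apply out_false. intros p Hp. unfold MK2, MK1. bsolve. }
  { eapply Desc_weaken; [exact HD7 | |]; intros m; unfold tmk, tf, istog, MK2, MK1, FB2, FB; bsolve. }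
  intros c8 HD8. replace (S (2 * T) + (2 * L - 1)) with (2 * T2) in HD8 by lia.
  assert (HT2a : tape ww T2 = Sym SA \/ mdelta (Main BD2) (tape ww T2) true = gL BD3 NoAction)
    by (destruct (tape ww T2) as [| |[|]]; auto).
  destruct HT2a as [E2|E2].
  { eapply to_rej; [exact HD8 | reflexivity | rewrite E2, out_even; unfold MK2; rewrite Nat.eqb_refl, orb_true_r; reflexivity |].
      apply Qp_f.
      - eapply tbound; [exact Hj | exact Ht | cbn [hcost dcost]; lia].
      - intros E. destruct (le_lt_dec T2 (Defs.N ww)).
        + rewrite (tape_allb E) in E2 by lia. discriminate.
        + replace T2 with (Defs.N ww + 1) in E2 by lia. rewrite tape_dollar in E2. discriminate. }
  gs (HL BD3) HLeft DLeft NoAction (T2 - 1) (2 * T2 - 1);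
    [ rewrite out_even; unfold MK2; rewrite Nat.eqb_refl, orb_true_r; exact E2
    | apply mh_left'; lia | apply md_left'; lia | apply notog |].
  intros c9 HD9.
  gs (Main BD3) HStay DLeft NoAction (T2 - 1) (2 * T2 - 1 - 1);
    [ reflexivity | reflexivity | apply md_left'; lia | apply notog |].
  intros c10 HD10.
  replace (2 * T2 - 1 - 1) with (2 * (T + (L - 1))) in HD10 by lia.
  replace (T2 - 1) with (T + (L - 1)) in HD10 by lia.
  clear E2.
  destruct (top_bad (fun i => isSB (tape ww i)) T (L - 1)) as [Hg | (p & Hp & Pp & Hg)].
  - eapply (walkL ww BD3 Qp (MK2 (a - 1) T T2) (FB2 (a - 1) T T2) T (L - 1)); [reflexivity | | lia | exact HD10 |].
    { intros i Hi. specialize (Hg i Hi). cbv beta in Hg.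
      destruct (tape ww i) as [| |[|]] eqn:Ei; try discriminate. unfold MK2, MK1. bsolve. }
    intros c11 HD11.
    destruct (tape ww T) as [| |[|]] eqn:E3.
    4:{
    gs (HL BC) HLeft DLeft Toggle0 (T - 1) (2 * T - 1);
      [ rewrite E3, out_even; unfold MK2, MK1; bsolve
      | apply mh_left'; lia | apply md_left'; lia | intros _; unfold FB2; bsolve |].
    intros c12 HD12.
    gs (Main BC) HStay DLeft NoAction (T - 1) (2 * T - 1 - 1);
      [reflexivity | reflexivity | apply md_left'; lia | apply notog |].
    intros c13 HD13.
    eapply (walkL ww BC Qp (MK1 (a - 1) T2) (FB (a - 1) T2) n L); [reflexivity | | lia | |].
    { intros i Hi. rewrite Hb by lia. reflexivity. }
    { replace (n + L) with (T - 1) by lia. replace (2 * (T - 1)) with (2 * T - 1 - 1) by lia.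
      eapply Desc_weaken; [exact HD13 | |]; intros m; unfold tmk, tf, istog, MK2, MK1, FB2, FB; bsolve. }
    intros c14 HD14. eapply K; [exact HD14 | | | lia].
    - eapply tstep; [exact Ht | cbn [hcost dcost]; lia].
    - intros i Hi. destruct (lt_dec i T); [apply Hb; lia|].
      destruct (Nat.eq_dec i T); [subst i; exact E3|].
      specialize (Hg i ltac:(lia)). cbv beta in Hg.
      destruct (tape ww i) as [| |[|]]; try discriminate; reflexivity. }
    all: eapply to_rej; [exact HD11 | reflexivity | rewrite E3; reflexivity |].
    all: apply Qp_f; [eapply tbound; [exact Hj | exact Ht | cbn [hcost dcost]; lia] |].
    all: intros E; rewrite (tape_allb E) in E3 by lia; discriminate.
  - eapply (walkL ww BD3 Qp (MK2 (a - 1) T T2) (FB2 (a - 1) T T2) p (T + (L - 1) - p)); [reflexivity | | lia | replace (p + (T + (L - 1) - p)) with (T + (L - 1)) by lia; exact HD10 |].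
    { intros i Hi. specialize (Hg i ltac:(lia)). cbv beta in Hg.
      destruct (tape ww i) as [| |[|]] eqn:Ei; try discriminate. unfold MK2, MK1. bsolve. }
    intros c11 HD11. cbv beta in Pp.
    destruct (tape ww p) as [| |[|]] eqn:E3; try discriminate.
    all: eapply to_rej; [exact HD11 | reflexivity | rewrite E3; reflexivity |].
    all: apply Qp_f; [eapply tbound; [exact Hj | exact Ht | cbn [hcost dcost]; lia] |].
    all: intros E; rewrite (tape_allb E) in E3 by lia; discriminate.
Qed.

Lemma rounds : forall d j c t, n - j = d -> j <= n ->
  Desc ww c (Main BC) n (2 * n) (MK1 (n - j) (n + 1 + 2 ^ j)) (FB (n - j) (n + 1 + 2 ^ j)) t ->
  t <= TB j ->
  (forall i, n + 1 <= i < n + 1 + 2 ^ j -> tape ww i = Sym SB) ->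
  n + 1 + 2 ^ j <= Defs.N ww + 1 -> G ww Qp c.
Proof.
  induction d as [|d IH]; intros j c t Hd Hj HD Ht Hb HT.
  - assert (j = n) by lia. subst j. rewrite Nat.sub_diag in HD.
    eapply final_phase; eauto.
  - eapply (round_step j); [lia | exact HD | exact Ht | exact Hb | exact HT |].
    intros c' t' HD' Ht' Hb' HT'. eapply (IH (S j)); [lia | lia | exact HD' | exact Ht' | exact Hb' | exact HT'].
Qed.

Lemma run_all : G ww Qp (init Mach).
Proof.
  assert (HD0 : Desc ww (init Mach) (Main BI) 0 0 (fun _ => false) (fun _ => 2) 0).
  { unfold Desc, init; simpl. repeat split; lia. }
  pose proof (lin_le n) as Hln. pose proof (pow_pos n) as Hp.
  eapply (walkR ww BI Qp (fun _ => false) (fun _ => 2) (n + 1) 0); [reflexivity | | rewrite NN_eq; lia | exact HD0 |].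
  { intros i Hi. destruct i as [|i]; [reflexivity|]. rewrite tape_a by lia. reflexivity. }
  intros c1 HD1. simpl Nat.add in HD1.
  destruct Hrest as [Er | (r' & Er)].
  - eapply to_rej; [exact HD1 | reflexivity | |].
    { replace (n + 1) with (Defs.N ww + 1) by (rewrite NN_eq, Er; simpl; lia). rewrite tape_dollar. reflexivity. }
    apply Qp_f; [cbn [hcost dcost]; lia|].
    intros E. rewrite Er in E. pose proof (f_equal (@length sym) E) as E'. simpl in E'. rewrite repeat_length in E'. lia.
  - assert (Hs : tape ww (n + 1) = Sym SB).
    { pose proof (tape_r 0) as H. rewrite Er in H. simpl in H. rewrite Nat.add_0_r in H. apply H. lia. }
    assert (HN : n + 1 <= Defs.N ww) by (rewrite NN_eq, Er; simpl; lia).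
    gs (HR BM) HRight DRight NoAction (S (n + 1)) (S (2 * (n + 1)));
      [rewrite Hs; reflexivity | apply mh_right; lia | apply md_right; lia | apply notog |].
    intros c2 HD2.
    gs (Main BM) HStay DRight NoAction (S (n + 1)) (2 * S (n + 1));
      [reflexivity | reflexivity | replace (2 * S (n + 1)) with (S (S (2 * (n + 1)))) by lia; apply md_right; lia | apply notog |].
    intros c3 HD3.
    gs (HL BC) HLeft DLeft Toggle0 (n + 1) (S (2 * (n + 1)));
      [reflexivity | reflexivity | replace (2 * S (n + 1)) with (S (S (2 * (n + 1)))) by lia; apply md_left; lia | intros _; cbv [tf istog]; lia |].
    intros c4 HD4.
    gs (Main BC) HStay DLeft NoAction (n + 1) (2 * (n + 1));
      [reflexivity | reflexivity | apply md_left; lia | apply notog |].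
    intros c5 HD5.
    eapply (walkL ww BC Qp (MK1 (n - 0) (n + 1 + 2 ^ 0)) (FB (n - 0) (n + 1 + 2 ^ 0)) n 1); [reflexivity | | lia | |].
    { intros i Hi. replace i with (n + 1) by lia. rewrite Hs. reflexivity. }
    { eapply Desc_weaken; [exact HD5 | |]; intros m; unfold tmk, tf, istog, MK1, FB; simpl Nat.pow; bsolve. }
    intros c6 HD6. eapply (rounds (n - 0) 0); [reflexivity | lia | exact HD6 | | |].
    + unfold TB. cbn [hcost dcost]. simpl Nat.pow. lia.
    + intros i Hi. simpl in Hi. replace i with (n + 1) by lia. exact Hs.
    + simpl. lia.
Qed.

End Main.

Lemma decomp : forall w, exists n rest, w = repeat SA n ++ rest /\ (rest = [] \/ exists r', rest = SB :: r').
Proof.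
  induction w as [|x w IH].
  - exists 0, []. auto.
  - destruct x.
    + destruct IH as (n & rest & E & H). exists (S n), rest. subst. auto.
    + exists 0, (SB :: w). simpl. eauto.
Qed.

Lemma decomp_uniq : forall n k r r', (r = [] \/ exists x, r = SB :: x) -> (r' = [] \/ exists x, r' = SB :: x) ->
  repeat SA n ++ r = repeat SA k ++ r' -> n = k /\ r = r'.
Proof.
  induction n as [|n IH]; intros [|k] r r' Hr Hr' E; simpl in E.
  - auto.
  - exfalso. destruct Hr as [->|(x & ->)]; discriminate.
  - exfalso. destruct Hr' as [->|(x & ->)]; discriminate.
  - injection E; intros E'. destruct (IH k r r' Hr Hr' E'). auto.
Qed.

Local Close Scope nat_scope.

Theorem corollary2 :
  exists M : OIA,
    recognizes M Lexp /\
    exists C : nat, forall n m : nat,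
      halts_within M (repeat SA n ++ repeat SB m) (C * 2 ^ n).
Proof.
  exists Mach. split.
  - intros w. destruct (decomp w) as (n & rest & Ew & Hr).
    destruct (run_all n rest Hr) as (r & t & Hh & Ht & Hiff).
    unfold ww in Hh. rewrite <- Ew in Hh.
    assert (HL : Lexp w <-> rest = repeat SB (2 ^ n)).
    { split.
      - intros (k & Ek). rewrite Ew in Ek.
        assert (Hk : repeat SB (2 ^ k) = [] \/ exists x, repeat SB (2 ^ k) = SB :: x).
        { right. pose proof (pow_pos k). destruct (2 ^ k)%nat as [|p]; [lia|]. simpl. eauto. }
        destruct (decomp_uniq n k _ _ Hr Hk Ek) as [E1 E2]. rewrite E2, E1. reflexivity.
      - intros E. exists n. rewrite Ew, E. reflexivity. }
    split.
    + intros HLw. split; [reflexivity|]. exists t. apply HL, Hiff in HLw. subst r. exact Hh.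
    + intros HnL. right. exists t. destruct r; [|exact Hh].
      exfalso. apply HnL, HL, Hiff. reflexivity.
  - exists 60%nat. intros n m. right.
    assert (Hr : repeat SB m = [] \/ exists x, repeat SB m = SB :: x).
    { destruct m; simpl; eauto. }
    destruct (run_all n (repeat SB m) Hr) as (r & t & Hh & Ht & _).
    exists r, t. split; [exact Hh | exact Ht].
Qed.
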